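(* Let $(\mathcal X_S,\mathcal X_O,\mathcal X_A,\mathfrak p,\mathbf r)$ be a POMDP and $T\in\mathbb Z_+$. For every feasible solution $(\mu,\delta)$ of the MILP (i.e. $(\mu,\delta)\in\mathcal Q^{\mathrm d}(T,\mathcal X_S,\mathcal X_O,\mathcal X_A,\mathfrak p)$) there exist nonnegative variables $(\mu^t_{s'a'soa})$, $t\in\{2,\dots,T\}$, such that the valid inequalities (VI) hold. Moreover, these inequalities are not implied by the linear relaxation: there exist POMDPs and feasible solutions $(\mu,\delta)$ of the linear relaxation of the MILP for which no choice of variables $(\mu^t_{s'a'soa})$ satisfies (VI).
   Context: A POMDP $(\mathcal X_S,\mathcal X_O,\mathcal X_A,\mathfrak p,\mathbf r)$ has finite spaces, initial distribution $p(s)$, emission probabilities $p(o|s)$, transitions $p(s'|s,a)$ and reward $r(s,a,s')$; $T$ is a horizon. A deterministic memoryless policy is $\delta=(\delta^t_{a|o})$ with $\delta^t_{a|o}\in\{0,1\}$, $\sum_a\delta^t_{a|o}=1$. The set $\mathcal Q^{\mathrm d}(T,\mathcal X_S,\mathcal X_O,\mathcal X_A,\mathfrak p)$ consists of pairs $(\mu,\delta)$, $\delta$ deterministic memoryless, and nonnegative $\mu=((\mu^1_s),(\mu^t_{soa}),(\mu^t_{sas'}))_{t\in[T]}$ satisfying for all $s,s',o,a,t$: (i) $\mu^1_s=p(s)$; (ii) $\sum_{o,a}\mu^t_{soa}=\nu^t_s$, where $\nu^1_s:=\mu^1_s$ and $\nu^t_s:=\sum_{s'',a''}\mu^{t-1}_{s''a''s}$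 for $t\ge2$; (iii) $\sum_{\bar s}\mu^t_{sa\bar s}=\sum_o\mu^t_{soa}$; (iv) $\mu^t_{sas'}=p(s'|s,a)\sum_{\bar s}\mu^t_{sa\bar s}$; (McCormick) $\mu^t_{soa}\le p(o|s)\nu^t_s$, $\mu^t_{soa}\le\delta^t_{a|o}$, $\mu^t_{soa}\ge p(o|s)\nu^t_s+\delta^t_{a|o}-1$. The MILP is $\max\sum_{t}\sum_{s,a,s'}r(s,a,s')\mu^t_{sas'}$ over $\mathcal Q^{\mathrm d}$; its linear relaxation replaces $\delta^t_{a|o}\in\{0,1\}$ by $\delta^t_{a|o}\in[0,1]$ (keeping $\sum_a\delta^t_{a|o}=1$). Valid inequalities (VI): for all $t\in\{2,\dots,T\}$, $s,s'\in\mathcal X_S$, $o\in\mathcal X_O$, $a,a'\in\mathcal X_A$: $\sum_{s',a'}\mu^t_{s'a'soa}=\mu^t_{soa}$; $\sum_a\mu^t_{s'a'soa}=p(o|s)\mu^{t-1}_{s'a's}$; $\mu^t_{s'a'soa}=p(s|s',a',o)\sum_{\bar s}\mu^t_{s'a'\bar soa}$, where $p(s|s',a',o):=\frac{p(o|s)p(s|s',a')}{\sum_{\bar s}p(o|\bar s)p(\bar s|s',a')}$. *)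

(* Defs.v *)
From HB Require Import structures.
From mathcomp Require Import all_boot all_order all_algebra.
Set Implicit Arguments. Unset Strict Implicit. Unset Printing Implicit Defensive.
Import Order.TTheory GRing.Theory Num.Theory.
Local Open Scope ring_scope.

Record pomdp (R : realFieldType) (S O A : finType) := Pomdp {
  p_init : S -> R;
  p_emit : S -> O -> R;
  p_trans : S -> A -> S -> R;      (* p(s'|s,a) = p_trans s a s' *)
  reward : S -> A -> S -> R;
  p_init_ge0 : forall s, 0 <= p_init s;
  p_init_sum : \sum_(s : S) p_init s = 1;
  p_emit_ge0 : forall s o, 0 <= p_emit s o;
  p_emit_sum : forall s, \sum_(o : O) p_emit s o = 1;
  p_trans_ge0 : forall s a s', 0 <= p_trans s a s';
  p_trans_sum : forall s a, \sum_(s' : S) p_trans s a s' = 1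
}.

Section Defs.
Variables (R : realFieldType) (S O A : finType) (P : pomdp R S O A) (T : nat).

(* Variables: mu1 s = mu^1_s ; muSOA t s o a = mu^t_{soa} ;
   muSAS t s a s' = mu^t_{sas'} ; delta t o a = delta^t_{a|o}.
   Times t range over [T] = {1,...,T}. *)

Definition nu (mu1 : S -> R) (muSAS : nat -> S -> A -> S -> R) (t : nat) (s : S) : R :=
  if t == 1%N then mu1 s
  else \sum_(s'' : S) \sum_(a'' : A) muSAS t.-1 s'' a'' s.

Definition Q_constraints (mu1 : S -> R) (muSOA : nat -> S -> O -> A -> R)
    (muSAS : nat -> S -> A -> S -> R) (delta : nat -> O -> A -> R) : Prop :=
  (forall s, 0 <= mu1 s) /\
  (forall t, (1 <= t <= T)%N -> forall s o a, 0 <= muSOA t s o a) /\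
  (forall t, (1 <= t <= T)%N -> forall s a s', 0 <= muSAS t s a s') /\
  (forall t, (1 <= t <= T)%N -> forall o, \sum_(a : A) delta t o a = 1) /\
  (forall s, mu1 s = p_init P s) /\
  (forall t, (1 <= t <= T)%N -> forall s,
      \sum_(o : O) \sum_(a : A) muSOA t s o a = nu mu1 muSAS t s) /\
  (forall t, (1 <= t <= T)%N -> forall s a,
      \sum_(sb : S) muSAS t s a sb = \sum_(o : O) muSOA t s o a) /\
  (forall t, (1 <= t <= T)%N -> forall s a s',
      muSAS t s a s' = p_trans P s a s' * \sum_(sb : S) muSAS t s a sb) /\
  (forall t, (1 <= t <= T)%N -> forall s o a,
      muSOA t s o a <= p_emit P s o * nu mu1 muSAS t s /\
      muSOA t s o a <= delta t o a /\
      p_emit P s o * nu mu1 muSAS t s + delta t o a - 1 <= muSOA t s o a).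

Definition Qd mu1 muSOA muSAS delta : Prop :=
  Q_constraints mu1 muSOA muSAS delta /\
  (forall t, (1 <= t <= T)%N -> forall o a, delta t o a = 0 \/ delta t o a = 1).

Definition Q_relax mu1 muSOA muSAS delta : Prop :=
  Q_constraints mu1 muSOA muSAS delta /\
  (forall t, (1 <= t <= T)%N -> forall o a, 0 <= delta t o a <= 1).

(* p(s | s', a', o); convention: value 0 when the denominator is 0
   (MathComp's x / 0 = 0). *)
Definition p_cond (s' : S) (a' : A) (o : O) (s : S) : R :=
  p_emit P s o * p_trans P s' a' s /
  \sum_(sb : S) p_emit P sb o * p_trans P s' a' sb.

Definition VI (muSOA : nat -> S -> O -> A -> R) (muSAS : nat -> S -> A -> S -> R)
    (mu4 : nat -> S -> A -> S -> O -> A -> R) : Prop :=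
  forall t, (2 <= t <= T)%N ->
    (forall s o a, \sum_(s' : S) \sum_(a' : A) mu4 t s' a' s o a = muSOA t s o a) /\
    (forall s' a' s o, \sum_(a : A) mu4 t s' a' s o a
                        = p_emit P s o * muSAS t.-1 s' a' s) /\
    (forall s' a' s o a, mu4 t s' a' s o a
                        = p_cond s' a' o s * \sum_(sb : S) mu4 t s' a' sb o a).

Definition mu4_nonneg (mu4 : nat -> S -> A -> S -> O -> A -> R) : Prop :=
  forall t, (2 <= t <= T)%N -> forall s' a' s o a, 0 <= mu4 t s' a' s o a.

End Defs.

(* Main.v *)
Require Import Defs.
From HB Require Import structures.
From mathcomp Require Import all_boot all_order all_algebra.
From mathcomp Require Import zify ring lra.
Import Order.TTheory GRing.Theory Num.Theory.
Local Open Scope ring_scope.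

Section Part1.
Variables (R : realFieldType) (S O A : finType) (P : pomdp R S O A) (T : nat).

Lemma part1 (mu1 : S -> R) (muSOA : nat -> S -> O -> A -> R)
           (muSAS : nat -> S -> A -> S -> R) (delta : nat -> O -> A -> R) :
      Qd P T mu1 muSOA muSAS delta ->
      exists mu4 : nat -> S -> A -> S -> O -> A -> R,
        mu4_nonneg T mu4 /\ VI P T muSOA muSAS mu4.
Proof.
move=> [[H0 [HSOA0 [HSAS0 [Hdsum [Hi [Hii [Hiii [Hiv Hmc]]]]]]]] Hd].
exists (fun t s' a' s o a => p_emit P s o * muSAS t.-1 s' a' s * delta t o a).
split.
  move=> t Ht s' a' s o a.
  have Ht1 : (1 <= t.-1 <= T)%N by lia.
  have Ht2 : (1 <= t <= T)%N by lia.
  apply: mulr_ge0; first apply: mulr_ge0.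
  - exact: p_emit_ge0.
  - exact: HSAS0.
  - by case: (Hd t Ht2 o a) => ->.
move=> t Ht.
have Ht1 : (1 <= t.-1 <= T)%N by lia.
have Ht2 : (1 <= t <= T)%N by lia.
split; [|split].
- move=> s o a.
  have -> : \sum_(s' : S) \sum_(a' : A) (p_emit P s o * muSAS t.-1 s' a' s * delta t o a)
     = p_emit P s o * (\sum_(s' : S) \sum_(a' : A) muSAS t.-1 s' a' s) * delta t o a.
    rewrite big_distrr big_distrl /=; apply: eq_bigr => s' _.
    by rewrite big_distrr big_distrl.
  have Hnu : nu mu1 muSAS t s = \sum_(s' : S) \sum_(a' : A) muSAS t.-1 s' a' s.
    by rewrite /nu ifN //; lia.
  rewrite -Hnu.
  have [m1 [m2 m3]] := Hmc t Ht2 s o a.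
  case: (Hd t Ht2 o a) => Hdv; rewrite Hdv in m1 m2 m3 *.
  + rewrite mulr0; apply/eqP; rewrite eq_le m2 HSOA0 //.
  + rewrite mulr1; apply/eqP; rewrite eq_le m1 /=.
    by rewrite andbT; move: m3; rewrite addrK.
- move=> s' a' s o.
  by rewrite -big_distrr /= Hdsum // mulr1.
- move=> s' a' s o a.
  set M := \sum_(sb : S) muSAS t.-1 s' a' sb.
  have Hm : forall sb, muSAS t.-1 s' a' sb = p_trans P s' a' sb * M.
    by move=> sb; rewrite Hiv.
  set D := \sum_(sb : S) p_emit P sb o * p_trans P s' a' sb.
  have HS : \sum_(sb : S) (p_emit P sb o * muSAS t.-1 s' a' sb * delta t o a)
      = D * M * delta t o a.
    rewrite !big_distrl /=; apply: eq_bigr => sb _; rewrite Hm; ring.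
  rewrite HS /p_cond -/D Hm.
  have [HD|HD] := eqVneq D 0.
    have Hz := @psumr_eq0P _ _ predT (fun sb => p_emit P sb o * p_trans P s' a' sb).
    have Hz0 : p_emit P s o * p_trans P s' a' s = 0.
      apply: Hz => //= i _; apply: mulr_ge0; [exact: p_emit_ge0|exact: p_trans_ge0].
    rewrite Hz0 mulrA Hz0; ring.
  by field.
Qed.
End Part1.
Section Part2.
Variable R : realFieldType.

Lemma half_sum : \sum_(b : bool) (1 / 2 : R) = 1.
Proof. rewrite big_bool /=; lra. Qed.

Lemma half_ge0 : 0 <= (1 / 2 : R).
Proof. lra. Qed.

Definition exP : pomdp R bool bool bool :=
  @Pomdp R bool bool bool (fun _ => 1/2) (fun _ _ => 1/2) (fun _ _ _ => 1/2)
    (fun _ _ _ => 0)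
    (fun _ => half_ge0) half_sum
    (fun _ _ => half_ge0) (fun _ => half_sum)
    (fun _ _ _ => half_ge0) (fun _ _ => half_sum).

Definition ex_mu1 : bool -> R := fun _ => 1/2.
Definition ex_muSOA (t : nat) (s o a : bool) : R :=
  if t == 1%N then 1/8 else if s == a then 1/4 else 0.
Definition ex_muSAS (t : nat) (s a s' : bool) : R :=
  1/2 * \sum_(o : bool) ex_muSOA t s o a.
Definition ex_delta (t : nat) (o a : bool) : R := 1/2.

Lemma part2 : exists (S O A : finType) (P : pomdp R S O A) (T : nat)
          (mu1 : S -> R) (muSOA : nat -> S -> O -> A -> R)
          (muSAS : nat -> S -> A -> S -> R) (delta : nat -> O -> A -> R),
      (0 < T)%N /\ Q_relax P T mu1 muSOA muSAS delta /\
      ~ (exists mu4 : nat -> S -> A -> S -> O -> A -> R,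
           mu4_nonneg T mu4 /\ VI P T muSOA muSAS mu4).
Proof.
exists bool, bool, bool, exP, 2%N, ex_mu1, ex_muSOA,
  ex_muSAS, ex_delta.
split => //.
have Tc : forall t, (1 <= t <= 2)%N -> t = 1%N \/ t = 2%N by move=> t Ht; lia.
split; first split.
  split; [|split;[|split;[|split;[|split;[|split;[|split;[|split]]]]]]].
  - by move=> s; rewrite /ex_mu1; lra.
  - move=> t /Tc [] -> [] [] [] /=; rewrite /ex_muSOA /=; lra.
  - move=> t /Tc [] -> [] [] [] /=; rewrite /ex_muSAS /ex_muSOA !big_bool /=; lra.
  - move=> t _ o; rewrite /ex_delta big_bool /=; lra.
  - by [].
  - move=> t /Tc [] -> [] /=; rewrite /nu /ex_mu1 /ex_muSAS /ex_muSOA !big_bool /=; lra.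
  - move=> t /Tc [] -> [] [] /=; rewrite /ex_muSAS /ex_muSOA !big_bool /=; lra.
  - move=> t /Tc [] -> [] [] [] /=; rewrite /ex_muSAS /ex_muSOA !big_bool /=; lra.
  - move=> t /Tc [] -> [] [] [] /=;
      rewrite /nu /ex_mu1 /ex_delta /ex_muSAS /ex_muSOA !big_bool /=; split; lra.
  move=> t _ o a; rewrite /ex_delta; apply/andP; split; lra.
move=> [mu4 [_ HVI]].
have [H1 [_ H3]] := HVI 2%N isT.
have Heq : forall s' a', mu4 2%N s' a' true false true = mu4 2%N s' a' false false true.
  by move=> s' a'; rewrite (H3 s' a' true false true) (H3 s' a' false false true).
have e1 := H1 true false true.
have e2 := H1 false false true.
have : ex_muSOA 2 true false true = ex_muSOA 2 false false true.
  rewrite -e1 -e2; apply: eq_bigr => s' _; apply: eq_bigr => a' _; exact: Heq.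
rewrite /ex_muSOA /=; lra.
Qed.
End Part2.

Theorem mainTheorem2 (R : realFieldType) :
  (* (1) VI are valid for every feasible solution of the MILP *)
  (forall (S O A : finType) (P : pomdp R S O A) (T : nat), (0 < T)%N ->
    forall (mu1 : S -> R) (muSOA : nat -> S -> O -> A -> R)
           (muSAS : nat -> S -> A -> S -> R) (delta : nat -> O -> A -> R),
      Qd P T mu1 muSOA muSAS delta ->
      exists mu4 : nat -> S -> A -> S -> O -> A -> R,
        mu4_nonneg T mu4 /\ VI P T muSOA muSAS mu4) /\
  (* (2) VI are not implied by the linear relaxation *)
  (exists (S O A : finType) (P : pomdp R S O A) (T : nat)
          (mu1 : S -> R) (muSOA : nat -> S -> O -> A -> R)
          (muSAS : nat -> S -> A -> S -> R) (delta : nat -> O -> A -> R),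
      (0 < T)%N /\ Q_relax P T mu1 muSOA muSAS delta /\
      ~ (exists mu4 : nat -> S -> A -> S -> O -> A -> R,
           mu4_nonneg T mu4 /\ VI P T muSOA muSAS mu4)).
Proof.
split; first by move=> S O A P T _; exact: part1.
exact: part2.
Qed.
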